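(* Let $G$ be a connected bipartite graph with vertex set $\{u_1,\dots,u_n\}$, $n\ge2$, and let $\mathcal{H}=\{H_1,\dots,H_n\}$ be a family of graphs such that $H_i\notin\mathcal{G}$ for some $i$. Then $\dim_l(G\circ\mathcal{H})=\sum_{i=1}^n\operatorname{adim}_l(H_i)$.
   Context: All graphs are finite and simple with at least one vertex. $d_G$ is shortest-path distance ($+\infty$ between components), $d_{G,2}=\min\{d_G,2\}$; $s$ distinguishes $x,y$ w.r.t. $d$ if $d(s,x)\ne d(s,y)$. $\dim_l(G)$: minimum size of $S\subseteq V(G)$ such that any two adjacent vertices are distinguished w.r.t. $d_G$ by some vertex of $S$. $\operatorname{adim}_l(H)$: minimum size of $S\subseteq V(H)$ such that any two adjacent vertices are distinguished w.r.t. $d_{H,2}$ by some vertex of $S$; minimum such sets are local adjacency bases. $\mathcal{G}$: class of graphs $H$ such that every local adjacency basis $B$ of $H$ satisfies $B\subseteq N_H(v)$ for some $v\in V(H)$. Lexicographic product $G\circ\mathcal{H}$: vertex set $\bigcup_i\{u_i\}\times V(H_i)$, $(u_i,v)\sim(u_j,w)$ iff $u_iu_j\in E(G)$, or $i=j$ and $vw\in E(H_i)$. *)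

(* Defs.v *)
From mathcomp Require Import all_boot.
Set Implicit Arguments. Unset Strict Implicit. Unset Printing Implicit Defensive.

Record sgraph := SGraph {
  vert :> finType;
  adj : rel vert;
  adj_sym : symmetric adj;
  adj_irr : irreflexive adj;
  vert_nonempty : 0 < #|vert| }.

Section Dist.
Variables (T : finType) (e : rel T).

Fixpoint within (k : nat) (x y : T) : bool :=
  if k is k'.+1 then within k' x y || [exists z, within k' x z && e z y]
  else x == y.

(* shortest-path distance; None encodes +infinity *)
Definition dist (x y : T) : option nat :=
  let k := find (fun k => within k x y) (iota 0 #|T|) in
  if k < #|T| then Some k else None.

Definition dist2 (x y : T) : nat :=
  if dist x y is Some k then minn k 2 else 2.

Definition local_resolving {D : eqType} (d : T -> T -> D) (S : {set T}) : bool :=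
  [forall x, forall y, e x y ==> [exists s in S, d s x != d s y]].

(* minimum size of a local resolving set (V(G) itself is one) *)
Definition local_dim {D : eqType} (d : T -> T -> D) : nat :=
  \big[minn/#|T|]_(S : {set T} | local_resolving d S) #|S|.

Definition local_metric_dim : nat := local_dim dist.
Definition local_adj_dim : nat := local_dim dist2.

Definition local_adj_basis (B : {set T}) : Prop :=
  local_resolving dist2 B /\ #|B| = local_adj_dim.

Definition open_nbhd (v : T) : {set T} := [set w | e v w].

Definition connected_graph : Prop := forall x y : T, connect e x y.

Definition bipartite : Prop :=
  exists f : T -> bool, forall x y, e x y -> f x != f y.
End Dist.

Definition in_classG (H : sgraph) : Prop :=
  forall B : {set H}, local_adj_basis (@adj H) B ->
    exists v : H, B \subset open_nbhd (@adj H) v.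

Definition lex_adj (G : sgraph) (H : G -> sgraph) : rel {u : G & H u} :=
  fun x y => adj (tag x) (tag y) ||
             ((tag x == tag y) && adj (tagged x) (tagged_as x y)).

(* Main.v *)
Require Import Defs.
From mathcomp Require Import all_boot.
From Stdlib Require Import Classical.
Set Implicit Arguments. Unset Strict Implicit. Unset Printing Implicit Defensive.

Section Gen.
Variables (T : finType) (e : rel T).

Lemma within1 x y : within e 1 x y = (x == y) || e x y.
Proof.
rewrite /=; congr (_ || _); apply/existsP/idP => [[z /andP[/eqP-> ->]]|exy] //.
by exists x; rewrite eqxx.
Qed.

Lemma withinS k x y : within e k x y -> within e k.+1 x y.
Proof. by move=> h /=; rewrite h. Qed.

Lemma within_le j k x y : j <= k -> within e j x y -> within e k x y.
Proof.
move=> /subnK <-; elim: (k - j) => // m IH h; rewrite addSn; exact/withinS/IH.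
Qed.

Lemma within_cons k x z y : e x z -> within e k z y -> within e k.+1 x y.
Proof.
elim: k y => [|k IH] y exz.
  by rewrite /=; move/eqP<-; rewrite orbC; apply/orP; left; apply/existsP; exists x; rewrite eqxx.
rewrite [within e k.+1 z y]/=; case/orP=> [h|/existsP[w /andP[h ewy]]].
  by apply: withinS; apply: IH.
by rewrite /=; apply/orP; right; apply/existsP; exists w; apply/andP; split => //; exact: (IH w exz h).
Qed.

Lemma path_within x p : path e x p -> within e (size p) x (last x p).
Proof.
elim: p x => [|z p IH] x /=; first by [].
by case/andP=> exz hp; apply: (within_cons exz); apply: IH.
Qed.

Lemma find_iota_spec (P : pred nat) d N : P d -> (forall j, j < d -> ~~ P j) -> d < N ->
  find P (iota 0 N) = d.
Proof.
move=> Pd Pj dN.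
rewrite -(subnKC (ltnW dN)) iotaD find_cat.
have -> : has P (iota 0 d) = false.
  by apply/hasP => [[j]]; rewrite mem_iota add0n => /andP[_ /Pj /negPf ->].
rewrite size_iota add0n.
case E: (N - d) => [|m]; first by move: dN; rewrite -subn_gt0 E.
by rewrite /= Pd addn0.
Qed.

Lemma dist_someI x y d : within e d x y -> (forall j, j < d -> ~~ within e j x y) ->
  d < #|T| -> dist e x y = Some d.
Proof.
by move=> h1 h2 h3; rewrite /dist (@find_iota_spec (fun k => within e k x y) d) // h3.
Qed.

Lemma dist_someE x y d : dist e x y = Some d ->
  within e d x y /\ (forall j, j < d -> ~~ within e j x y).
Proof.
rewrite /dist; set P := (fun k => within e k x y).
case: ifP => // hlt [<-]; split.
  have := nth_find 0 (a := P) (s := iota 0 #|T|).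
  rewrite has_find size_iota => /(_ hlt).
  by rewrite nth_iota // add0n.
move=> j hj; have := before_find 0 (a := P) (s := iota 0 #|T|) hj.
rewrite nth_iota ?add0n //; last by apply: ltn_trans hlt.
by rewrite /P => ->.
Qed.

Lemma dist_some_within x y k : k < #|T| -> within e k x y -> exists d, dist e x y = Some d.
Proof.
move=> hk hw; rewrite /dist; set P := (fun k => within e k x y).
have hh : has P (iota 0 #|T|) by apply/hasP; exists k => //; rewrite mem_iota.
move: hh; rewrite has_find size_iota => ->; eexists; reflexivity.
Qed.

Lemma connect_dist x y : connect e x y -> exists d, dist e x y = Some d.
Proof.
case/connectP=> p hp ->.
case: (shortenP hp) => p' hp' hu _.
apply: (@dist_some_within _ _ (size p')); last exact: path_within.
have := card_uniqP hu => /= h.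
have : #|x :: p'| <= #|T| by apply: max_card.
by rewrite h.
Qed.

Lemma dist_min x y d j : dist e x y = Some d -> within e j x y -> d <= j.
Proof.
case/dist_someE => _ h hj; rewrite leqNgt; apply/negP => /h; by rewrite hj.
Qed.

Lemma dist2_0 x y : dist2 e x y = 0 -> x = y.
Proof.
rewrite /dist2; case E: dist => [k|] //; case: k E => [|k] E //.
  by move=> _; case/dist_someE: E => /= /eqP.
by case: k E.
Qed.

Lemma dist2_1 x y : dist2 e x y = 1 -> (x == y) || e x y.
Proof.
rewrite /dist2; case E: dist => [k|] //; case: k E => [|[|k]] E //.
by case/dist_someE: E; rewrite within1.
Qed.

Lemma dist_lt x y d : dist e x y = Some d -> d < #|T|.
Proof. by rewrite /dist; case: ifP => // hlt [<-]. Qed.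

Lemma within_parity (f : T -> bool) : (forall x y, e x y -> f x != f y) ->
  forall k x y, within e k x y -> exists j, [/\ j <= k, within e j x y & f y = odd j (+) f x].
Proof.
move=> hf; elim=> [|k IH] x y.
  by move=> /= /eqP ->; exists 0; split; rewrite /= ?eqxx.
rewrite [within e k.+1 x y]/=; case/orP=> [/IH [j [h1 h2 h3]]|/existsP[z /andP[/IH [j [h1 h2 h3]] ezy]]].
  by exists j; split => //; apply: leqW.
exists j.+1; split => //.
  by apply/orP; right; apply/existsP; exists z; rewrite ezy andbT.
move: (hf _ _ ezy); rewrite h3 /=; by case: (f y); case: (odd j); case: (f x).
Qed.

Lemma dist_parity (f : T -> bool) : (forall x y, e x y -> f x != f y) ->
  forall x y d, dist e x y = Some d -> f y = odd d (+) f x.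
Proof.
move=> hf x y d /dist_someE [hw hmin].
have [j [h1 h2 h3]] := within_parity hf hw.
case: (ltnP j d) => hjd; first by move: (hmin _ hjd); rewrite h2.
have hj : j = d by apply/eqP; rewrite eqn_leq h1 hjd.
by rewrite -hj.
Qed.

Lemma bigmin_le (I : finType) (P : pred I) (F : I -> nat) d j :
  P j -> \big[minn/d]_(i | P i) F i <= F j.
Proof.
move=> Pj; have : j \in index_enum I by rewrite mem_index_enum.
elim: (index_enum I) => [|i r IH] //; rewrite big_cons inE.
case/orP=> [/eqP <-|jr]; first by rewrite Pj geq_minl.
case: ifP => _; last exact: IH.
by apply: leq_trans (geq_minr _ _) (IH jr).
Qed.

Lemma bigmin_ge (I : finType) (P : pred I) (F : I -> nat) d m :
  m <= d -> (forall i, P i -> m <= F i) -> m <= \big[minn/d]_(i | P i) F i.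
Proof.
move=> hd hF; apply: (big_ind (fun x => m <= x)) => //.
by move=> a b ha hb; rewrite leq_min ha hb.
Qed.

Lemma bigmin_ex (I : finType) (P : pred I) (F : I -> nat) d :
  \big[minn/d]_(i | P i) F i = d \/ exists i, P i /\ F i = \big[minn/d]_(i | P i) F i.
Proof.
apply: (big_ind (fun x => x = d \/ exists i, P i /\ F i = x)).
- by left.
- move=> a b ha hb; case: (leqP a b) => h.
    by [].
  by [].
- by move=> i Pi; right; exists i.
Qed.

Lemma uniq_card (s : seq T) : uniq s -> size s <= #|T|.
Proof. by move/card_uniqP <-; apply: max_card. Qed.

Lemma dist2_2 x y : x != y -> ~~ e x y -> dist2 e x y = 2.
Proof.
move=> nxy nexy; rewrite /dist2; case E: dist => [k|] //; case: k E => [|[|k]] E //.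
  by case/dist_someE: E => /= h; rewrite h in nxy.
by case/dist_someE: E; rewrite within1 (negPf nxy) (negPf nexy).
Qed.

Hypothesis eirr : irreflexive e.

Lemma dist2_xx x : dist2 e x x = 0.
Proof.
rewrite /dist2 (@dist_someI x x 0) //=; apply/card_gt0P; by exists x.
Qed.

Lemma resolving_setT : local_resolving e (dist2 e) setT.
Proof.
apply/forallP=> x; apply/forallP=> y; apply/implyP=> exy.
apply/existsP; exists x; rewrite in_setT dist2_xx /=.
apply/eqP=> /esym/dist2_0 h; by move: exy; rewrite h eirr.
Qed.

Lemma basis_exists : exists B : {set T},
  local_resolving e (dist2 e) B /\ #|B| = local_adj_dim e.
Proof.
rewrite /local_adj_dim /local_dim.
case: (bigmin_ex (fun S : {set T} => local_resolving e (dist2 e) S) (fun S => #|S|) #|T|) => [->|[S [h1 h2]]].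
  by exists setT; rewrite cardsT resolving_setT.
by exists S.
Qed.

Lemma adim_le_card (S : {set T}) : local_resolving e (dist2 e) S -> local_adj_dim e <= #|S|.
Proof. by move=> h; apply: (bigmin_le (P := fun S : {set T} => local_resolving e (dist2 e) S)). Qed.

Lemma adim_le : local_adj_dim e <= #|T|.
Proof. by rewrite -cardsT; apply/adim_le_card/resolving_setT. Qed.
End Gen.

Section Lex.
Variables (G : sgraph) (H : G -> sgraph).
Notation T := {u : G & H u}.
Notation P := (@lex_adj G H).
Definition tg (u : G) (a : H u) : T := existT (fun u => H u) u a.

Lemma lex_same u (a b : H u) : P (tg a) (tg b) = adj a b.
Proof. by rewrite /lex_adj /= adj_irr eqxx /= tagged_asE. Qed.

Lemma lex_diff (x y : T) : adj (tag x) (tag y) -> P x y.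
Proof. by rewrite /lex_adj => ->. Qed.

Lemma elt_ex (u : G) : exists c : H u, true.
Proof. by case/card_gt0P: (vert_nonempty (H u)) => c _; exists c. Qed.
Definition elt u : H u := xchoose (elt_ex u).

Lemma card_GT : #|G| <= #|{: T}|.
Proof.
apply: (@leq_card _ _ (fun u => tg (elt u))) => u v /(congr1 tag) //.
Qed.

Lemma proj_within k (x y : T) : within P k x y -> within (@adj G) k (tag x) (tag y).
Proof.
elim: k y => [|k IH] y; first by move=> /= /eqP ->.
rewrite [within P k.+1 x y]/=; case/orP=> [/IH/withinS //|/existsP[z /andP[/IH hz]]].
rewrite /lex_adj; case/orP=> [hzy|/andP[/eqP hzy _]].
  by rewrite /=; apply/orP; right; apply/existsP; exists (tag z); rewrite hz hzy.
by apply: withinS; rewrite -hzy.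
Qed.

Lemma lift_within k (x y : T) : within (@adj G) k (tag x) (tag y) -> tag x != tag y ->
  within P k x y.
Proof.
elim: k y => [|k IH] y; first by move=> /= ->.
rewrite [within _ k.+1 _ _]/=; case/orP=> [/IH h /h /withinS //|/existsP[z /andP[hz hzy]]] hne.
case: (eqVneq z (tag x)) => [ez|nz].
  apply: (@within_le _ _ 1); first by [].
  by rewrite within1 lex_diff ?orbT // -ez.
have h := IH (tg (elt z)) hz; rewrite eq_sym in nz; have {h} := h nz.
move=> h; rewrite /=; apply/orP; right; apply/existsP; exists (tg (elt z)).
by rewrite h lex_diff.
Qed.

Hypothesis Gconn : connected_graph (@adj G).

Lemma L1 (x y : T) : tag x != tag y -> dist P x y = dist (@adj G) (tag x) (tag y).
Proof.
move=> hne; have [d hd] := connect_dist (Gconn (tag x) (tag y)).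
rewrite hd; have [hw hmin] := dist_someE hd.
apply: dist_someI.
- exact: lift_within.
- by move=> j /hmin hj; apply/negP => /proj_within; apply/negP.
- exact: leq_trans (dist_lt hd) card_GT.
Qed.

Lemma tg_inj u : injective (@tg u).
Proof. by move=> c a /(congr1 (tagged_as (tg c))); rewrite !tagged_asE. Qed.

Hypothesis G2 : 2 <= #|G|.

Lemma neighbor (u : G) : exists w, adj u w.
Proof.
have : 0 < #|[set~ u]| by rewrite cardsC1 -subn1 subn_gt0.
case/card_gt0P => v; rewrite in_setC1 => hv.
case/connectP: (Gconn u v) => p hp hl.
case: p hp hl => [|z p] /=.
  by move=> _ hvu; rewrite hvu eqxx in hv.
by case/andP => huz _ _; exists z.
Qed.

Lemma L2 u (c a : H u) : dist P (tg c) (tg a) = Some (dist2 (@adj (H u)) c a).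
Proof.
case: (eqVneq c a) => [->|nca].
  rewrite dist2_xx.
  apply: dist_someI => //=.
  by apply/card_gt0P; exists (tg a).
have ntg : tg c != tg a by apply/contra_neq: nca; apply: tg_inj.
case hca: (adj c a).
  have -> : dist2 (@adj (H u)) c a = 1.
    rewrite /dist2 (@dist_someI _ _ c a 1) //.
    - by rewrite within1 hca orbT.
    - by case=> //= _; rewrite (negPf nca).
    - by apply: (uniq_card (s := [:: c; a])); rewrite /= inE nca.
  apply: dist_someI.
  - by rewrite within1 lex_same hca orbT.
  - by case=> //= _; rewrite (negPf ntg).
  - by apply: (uniq_card (s := [:: tg c; tg a])); rewrite /= inE ntg.
rewrite dist2_2 ?hca //.
have [w huw] := neighbor u.
have nwu : w != u by apply/contraTneq: huw => ->; rewrite adj_irr.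
apply: dist_someI.
- apply: (@within_cons _ _ 1 _ (tg (elt w))); first by apply: lex_diff.
  by rewrite within1 lex_diff ?orbT //= adj_sym.
- case=> [|[|j]] // _.
  by rewrite within1 (negPf ntg) lex_same hca.
- apply: (uniq_card (s := [:: tg c; tg a; tg (elt w)])).
  rewrite /= !inE negb_or ntg /= andbT; apply/andP; split; apply/negP => /eqP/(congr1 tag) /= h;
    by rewrite h eqxx in nwu.
Qed.

Lemma Gdist_adj (u v : G) : adj u v -> dist (@adj G) u v = Some 1.
Proof.
move=> huv; have nuv : u != v by apply/contraTneq: huv => ->; rewrite adj_irr.
apply: dist_someI => //.
- by rewrite within1 huv orbT.
- by case=> //= _; rewrite (negPf nuv).
Qed.
End Lex.

Lemma card_part (G : sgraph) (H : G -> sgraph) (S : {set {u : G & H u}}) :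
  #|S| = \sum_(u : G) #|[set a : H u | tg a \in S]|.
Proof.
rewrite -sum1_card (partition_big tag xpredT) //=; apply: eq_bigr => u _.
rewrite -(card_imset _ (@tg_inj G H u)) -sum1_card; apply: eq_bigl => x.
apply/idP/idP.
  case/andP; case: x => v b /= hS /eqP ev; subst v; apply/imsetP; exists b => //.
  by rewrite inE.
by case/imsetP => a; rewrite inE => ha ->; rewrite ha eqxx.
Qed.

Theorem mainTheorem5 (G : sgraph) (H : G -> sgraph) :
  2 <= #|G| ->
  connected_graph (@adj G) ->
  bipartite (@adj G) ->
  (exists i : G, ~ in_classG (H i)) ->
  local_metric_dim (@lex_adj G H) = \sum_(i : G) local_adj_dim (@adj (H i)).
Proof.
move=> G2 Gconn [f hf] [i hi].
set P := @lex_adj G H.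
apply/eqP; rewrite eqn_leq; apply/andP; split.
- have [Bi [hBi hBnot]] : exists B : {set H i}, local_adj_basis (@adj (H i)) B /\
      forall v, ~~ (B \subset open_nbhd (@adj (H i)) v).
    apply: NNPP => hn; apply: hi => B hB; apply: NNPP => hv; apply: hn; exists B; split => // v.
    by apply/negP => hsub; apply: hv; exists v.
  have ex (u : G) : exists B : {set H u}, [&& local_resolving (@adj (H u)) (dist2 (@adj (H u))) B,
      #|B| == local_adj_dim (@adj (H u)) &
      (u == i) ==> [forall v, ~~ (B \subset open_nbhd (@adj (H u)) v)]].
    case: (eqVneq u i) => [->|nui].
      exists Bi; case: hBi => h1 h2; rewrite h1 h2 eqxx /=; apply/forallP => v; exact: hBnot v.
    have [B [h1 h2]] := @basis_exists _ _ (@adj_irr (H u)).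
    by exists B; rewrite h1 h2 eqxx /=.
  pose B u := xchoose (ex u).
  have hB u : [&& local_resolving (@adj (H u)) (dist2 (@adj (H u))) (B u),
      #|B u| == local_adj_dim (@adj (H u)) &
      (u == i) ==> [forall v, ~~ (B u \subset open_nbhd (@adj (H u)) v)]] := xchooseP (ex u).
  pose S := [set x : {u : G & H u} | tagged x \in B (tag x)].
  have cardS : #|S| = \sum_(u : G) local_adj_dim (@adj (H u)).
    rewrite card_part; apply: eq_bigr => u _.
    have -> : [set a | tg a \in S] = B u by apply/setP => a; rewrite !inE.
    by case/and3P: (hB u) => _ /eqP -> _.
  rewrite -cardS /local_metric_dim /local_dim.
  apply: (bigmin_le (P := fun S => local_resolving P (dist P) S)).
  apply/forallP=> -[u a]; apply/forallP=> -[v b]; apply/implyP.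
  rewrite /P /lex_adj /=; case/orP => [huv | /andP[/eqP euv hab]]; last first.
    subst v; rewrite tagged_asE in hab.
    case/and3P: (hB u) => /forallP /(_ a) /forallP /(_ b); rewrite hab => /existsP [c /andP[hc hd]] _ _.
    apply/existsP; exists (tg c); rewrite inE hc /=.
    change (dist (@lex_adj G H) (tg c) (tg a) != dist (@lex_adj G H) (tg c) (tg b)); rewrite !L2 //.
  have nuv : u != v by apply/contraTneq: huv => ->; rewrite adj_irr.
  have hBI : forall w, ~~ (B i \subset open_nbhd (@adj (H i)) w).
    by move=> w; case/and3P: (hB i) => _ _; rewrite eqxx /= => /forallP.
  case: (eqVneq i u) => [eiu|niu].
    subst i; case/subsetPn: (hBI a) => c hc; rewrite inE => hac.
    apply/existsP; exists (tg c); rewrite inE hc /=.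
    change (dist (@lex_adj G H) (tg c) (tg a) != dist (@lex_adj G H) (tg c) (tg b)); rewrite L2 // L1 //= (Gdist_adj G2 huv).
    apply/negP => /eqP [] h; have := dist2_1 h; case/orP => [/eqP eca|].
      by move: h; rewrite eca dist2_xx.
    by rewrite adj_sym (negPf hac).
  case: (eqVneq i v) => [eiv|niv].
    subst i; case/subsetPn: (hBI b) => c hc; rewrite inE => hbc.
    apply/existsP; exists (tg c); rewrite inE hc /=.
    change (dist (@lex_adj G H) (tg c) (tg a) != dist (@lex_adj G H) (tg c) (tg b)); rewrite L2 // L1 //= adj_sym in huv *.
    rewrite (Gdist_adj G2 huv).
    apply/negP => /eqP [] /esym h; have := dist2_1 h; case/orP => [/eqP ecb|].
      by move: h; rewrite ecb dist2_xx.
    by rewrite adj_sym (negPf hbc).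
  case/subsetPn: (hBI (@elt G H i)) => c hc _.
  apply/existsP; exists (tg c); rewrite inE hc /=.
  change (dist (@lex_adj G H) (tg c) (tg a) != dist (@lex_adj G H) (tg c) (tg b)); rewrite !L1 //=.
  have [d1 hd1] := connect_dist (Gconn i u).
  have [d2 hd2] := connect_dist (Gconn i v).
  rewrite hd1 hd2; apply/negP => /eqP [] e12.
  have p1 := dist_parity hf hd1; have p2 := dist_parity hf hd2.
  by move: (hf _ _ huv); rewrite p1 p2 e12 eqxx.
rewrite /local_metric_dim /local_dim; apply: bigmin_ge.
  rewrite -cardsT card_part; apply: leq_sum => u _.
  have -> : [set a : H u | tg a \in [set: {u : G & H u}]] = setT by apply/setP => a; rewrite !inE.
  by rewrite cardsT; apply: adim_le; apply: adj_irr.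
move=> S hS; rewrite card_part; apply: leq_sum => u _; apply: adim_le_card.
apply/forallP=> a; apply/forallP=> b; apply/implyP=> hab.
move/forallP: hS => /(_ (tg a)) /forallP /(_ (tg b)).
rewrite /P lex_same hab /= => /existsP [[w c] /andP[hs hd]].
case: (eqVneq w u) => [ewu|nwu].
  subst w; apply/existsP; exists c; rewrite inE.
  rewrite hs /=.
  change (is_true (dist (@lex_adj G H) (tg c) (tg a) != dist (@lex_adj G H) (tg c) (tg b))) in hd.
  by rewrite !L2 // in hd.
by rewrite !L1 // eqxx in hd.
Qed.
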